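(* Let $X$ be a real normed space, $f:X\to\mathbb R\cup\{+\infty\}$ proper, $\bar x\in(\partial f)^{-1}(0)$, and $p,q\in(1,\infty)$ with $p^{-1}+q^{-1}=1$. (i) Suppose there exist $\beta\in(0,+\infty]$, $\kappa\in(0,+\infty)$ and a dense subset $\mathcal W$ of $\mathbb B_*(0,\beta)$ such that for every $\xi\in\mathcal W$ there is $x\in X$ with $\xi\in\partial f(x)$ and $\|x-\bar x\|\le\kappa\|\xi\|^{q/p}$. Then for every $\delta\in(0,+\infty)$, $$f(x)\ge f(\bar x)+\frac12\min\Big\{\frac{\beta}{\delta^{p/q}},\frac{1}{(2\kappa)^{p/q}}\Big\}\|x-\bar x\|^p\quad\text{for all }x\in\mathbb B(\bar x,\delta).$$ (ii) Suppose $\partial f$ is strongly $\frac qp$-subregular at $\bar x$ with parameters $\alpha\in(0,+\infty]$ and $\kappa\in(0,+\infty)$. Then $$f(x)\ge f(\bar x)+\frac{1}{2(2\kappa)^{p/q}}\|x-\bar x\|^p\quad\text{for all }x\in\bar x+2\kappa\,J_p^{-1}\Big(\overline{\partial f(\mathbb B(\bar x,\alpha))}\Big).$$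
   Context: $\partial f(x):=\{\xi\in X^*: x\text{ is a global minimizer of } f-\langle\xi,\cdot\rangle\}$ (Fenchel–Moreau subdifferential, $f$ possibly nonconvex); $(\partial f)^{-1}(0)=\{x:0\in\partial f(x)\}$; $\partial f(A)=\bigcup_{x\in A}\partial f(x)$. $\mathbb B(x,r)$ and $\mathbb B_*(\xi,r)$ are closed balls in $X$ and $X^*$, with $\mathbb B(x,+\infty)=X$. Duality mapping: $J_p(x):=\{\xi\in X^*:\langle\xi,x\rangle=\|\xi\|\|x\|,\ \|\xi\|=\|x\|^{p-1}\}$, and $J_p^{-1}(A):=\{x: J_p(x)\cap A\ne\emptyset\}$. A set-valued map $\mathcal F:X\rightrightarrows Y$ is strongly $\lambda$-subregular at $\bar x\in\mathcal F^{-1}(0)$ with parameters $\alpha\in(0,+\infty]$, $\kappa\in(0,+\infty)$ if $\|x-\bar x\|\le\kappa\, d(0,\mathcal F(x))^\lambda$ for all $x\in\mathbb B(\bar x,\alpha)$, where $d(0,\mathcal F(x))=\inf\{\|y\|:y\in\mathcal F(x)\}$ ($=+\infty$ if $\mathcal F(x)=\emptyset$). *)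

(* Defs.v *)
From HB Require Import structures.
From mathcomp Require Import all_boot all_order all_algebra.
From mathcomp Require Import all_classical all_reals all_analysis.
Set Implicit Arguments. Unset Strict Implicit. Unset Printing Implicit Defensive.
Import Order.TTheory GRing.Theory Num.Theory.
Import numFieldNormedType.Exports.
Local Open Scope classical_set_scope.
Local Open Scope ring_scope.

Section Defs.
Variables (R : realType) (X : normedModType R).

Definition dual_elt (xi : X -> R) : Prop :=
  (forall (a : R) (x y : X), xi (a *: x + y) = a * xi x + xi y) /\ continuous xi.

Definition dnorm (xi : X -> R) : R := sup [set Num.norm (xi x) | x in [set x : X | `|x| <= 1]].

(* Closed ball B_*(0, beta) in X^*, beta in (0,+oo] (beta = +oo gives all of X^* ). *)
Definition dball0 (beta : \bar R) : set (X -> R) :=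
  [set xi | dual_elt xi /\ ((dnorm xi)%:E <= beta)%E].

Definition dclosure (A : set (X -> R)) : set (X -> R) :=
  [set xi | dual_elt xi /\
     forall eps : R, 0 < eps -> exists2 eta, A eta & dnorm (fun x => xi x - eta x) < eps].

Definition dense_in (W B : set (X -> R)) : Prop := W `<=` B /\ B `<=` dclosure W.

Definition proper_fun (f : X -> \bar R) : Prop :=
  (forall x, f x != -oo%E) /\ exists x, f x != +oo%E.

Definition subdiff (f : X -> \bar R) (x : X) : set (X -> R) :=
  [set xi | dual_elt xi /\ forall y, (f x - (xi x)%:E <= f y - (xi y)%:E)%E].

Definition cball (x : X) (r : \bar R) : set X := [set y | ((`|y - x|)%:E <= r)%E].

Definition subdiff_set (f : X -> \bar R) (A : set X) : set (X -> R) :=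
  [set xi | exists2 x, A x & subdiff f x xi].

(* d(0, F(x)) = inf of dual norms, +oo if F(x) is empty. *)
Definition dist0_subdiff (f : X -> \bar R) (x : X) : \bar R :=
  ereal_inf [set (dnorm xi)%:E | xi in subdiff f x].

Definition subdiff_strongly_subregular (f : X -> \bar R) (xbar : X)
    (lam : R) (alpha : \bar R) (kappa : R) : Prop :=
  subdiff f xbar (fun _ => 0) /\
  forall x, cball xbar alpha x ->
    ((`|x - xbar|)%:E <= kappa%:E * (dist0_subdiff f x) `^ lam)%E.

Definition dualmap (p : R) (x : X) : set (X -> R) :=
  [set xi | dual_elt xi /\ xi x = dnorm xi * `|x| /\ dnorm xi = `|x| `^ (p - 1)].

Definition dualmap_inv (p : R) (A : set (X -> R)) : set X :=
  [set x | exists2 xi, dualmap p x xi & A xi].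

End Defs.

(* Main.v *)
Require Import Defs.
From HB Require Import structures.
From mathcomp Require Import all_boot all_order all_algebra.
From mathcomp Require Import all_classical all_reals all_analysis.
From mathcomp Require Import ring lra.
Set Implicit Arguments. Unset Strict Implicit. Unset Printing Implicit Defensive.
Import Order.TTheory GRing.Theory Num.Theory.
Import numFieldNormedType.Exports.
Local Open Scope classical_set_scope.
Local Open Scope ring_scope.

Section Aux.
Variables (R : realType) (X : normedModType R).
Implicit Types xi eta : X -> R.

Lemma my_lin0 xi : dual_elt xi -> xi 0 = 0.
Proof.
case=> L _; have := L 1 0 0; rewrite scaler0 addr0 mul1r => /eqP.
by rewrite -subr_eq0 opprD addrA subrr add0r oppr_eq0 => /eqP.
Qed.

Lemma my_linD xi x y : dual_elt xi -> xi (x + y) = xi x + xi y.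
Proof. by case=> L _; rewrite -[x in LHS]scale1r L mul1r. Qed.

Lemma my_linZ xi a x : dual_elt xi -> xi (a *: x) = a * xi x.
Proof. by move=> h; have [L _] := h; rewrite -[_ *: x]addr0 L my_lin0 // addr0. Qed.

Lemma my_linN xi x : dual_elt xi -> xi (- x) = - xi x.
Proof. by move=> h; rewrite -scaleN1r my_linZ // mulN1r. Qed.

Lemma my_linB xi x y : dual_elt xi -> xi (x - y) = xi x - xi y.
Proof. by move=> h; rewrite my_linD // my_linN. Qed.

Lemma my_dual_bounded xi : dual_elt xi ->
  exists2 M, 0 < M & forall x, `|xi x| <= M * `|x|.
Proof.
move=> h; have [_ C] := h.
have := @cvgr_dist_lt _ _ _ _ _ xi _ (C 0) 1 ltr01; rewrite my_lin0 // => /(_ _)H.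
have [/= e e0 He] := iffLR nbhs_norm0P H.
exists (2 / e); first by rewrite divr_gt0.
move=> x; have [->|x0] := eqVneq x 0; first by rewrite my_lin0 // normr0 normr0 mulr0.
have nx : 0 < `|x| by rewrite normr_gt0.
pose y := (e / 2 / `|x|) *: x.
have ny : `|y| < e.
  rewrite /y normrZ ger0_norm; last by rewrite !divr_ge0 // ltW.
  by rewrite divfK ?gt_eqF // ltr_pdivrMr // ltr_pMr // ltr1n.
have := He _ ny; rewrite sub0r normrN /y my_linZ // normrM ger0_norm; last first.
  by rewrite !divr_ge0 // ltW.
move=> H1; rewrite -(ler_pM2l (_ : 0 < e / 2 / `|x|)); last first.
  by rewrite !divr_gt0.
apply: (le_trans (ltW H1)); rewrite le_eqVlt; apply/orP; left; apply/eqP.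
field; by rewrite !gt_eqF.
Qed.

Lemma my_dnorm_ub xi : dual_elt xi -> has_sup [set Num.norm (xi x) | x in [set x : X | `|x| <= 1]].
Proof.
move=> h; have [M M0 HM] := my_dual_bounded h; split.
  by exists `|xi 0|, 0 => //=; rewrite normr0.
exists M => _ [x /= x1 <-]; apply: (le_trans (HM x)).
by rewrite ler_piMr // ltW.
Qed.

Lemma my_dnorm_ge0 xi : dual_elt xi -> 0 <= dnorm xi.
Proof.
move=> h; apply: le_trans (sup_upper_bound (my_dnorm_ub h) _).
  exact: (normr_ge0 (xi 0)).
by exists 0 => //=; rewrite normr0.
Qed.

Lemma my_dnorm_le xi x : dual_elt xi -> `|xi x| <= dnorm xi * `|x|.
Proof.
move=> h; have [->|x0] := eqVneq x 0; first by rewrite my_lin0 // !normr0 mulr0.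
have nx : 0 < `|x| by rewrite normr_gt0.
have : `|xi (`|x|^-1 *: x)| <= dnorm xi.
  apply: (sup_upper_bound (my_dnorm_ub h)); exists (`|x|^-1 *: x) => //=.
  by rewrite normrZ normfV normr_id mulVf ?gt_eqF.
rewrite my_linZ // normrM normfV normr_id mulrC => H.
by rewrite -ler_pdivrMr.
Qed.

Lemma my_dnorm_leP xi M : dual_elt xi -> (forall x, `|x| <= 1 -> `|xi x| <= M) -> dnorm xi <= M.
Proof.
move=> h H; apply: ge_sup; first by exists `|xi 0|, 0 => //=; rewrite normr0.
by move=> _ [x /= x1 <-]; exact: H.
Qed.

Lemma my_dual_sub xi eta : dual_elt xi -> dual_elt eta -> dual_elt (fun x => xi x - eta x).
Proof.
move=> h1 h2; split.
  by move=> a x y; rewrite (proj1 h1) (proj1 h2); ring.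
by move=> x; apply: cvgB; [exact: (proj2 h1) | exact: (proj2 h2)].
Qed.

Lemma my_dual_scale xi t : dual_elt xi -> dual_elt (fun x => t * xi x).
Proof.
move=> h1; split.
  by move=> a x y; rewrite (proj1 h1); ring.
by move=> x; apply: cvgM; [exact: cvg_cst | exact: (proj2 h1)].
Qed.

End Aux.

Section HBsec.
Variables (R : realType) (X : normedModType R) (v : X).
Hypothesis v0 : v != 0.

Definition PG (G : set (X * R)) : Prop :=
  [/\ (forall a x r y s, G (x, r) -> G (y, s) -> G (a *: x + y, a * r + s)),
      (forall x r s, G (x, r) -> G (x, s) -> r = s),
      (forall x r, G (x, r) -> r <= `|x|) &
      (forall z, G z -> G (v, `|v|))].

Lemma PG_chain (F : set (set (X * R))) : F `<=` PG -> total_on F subset ->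
  PG (\bigcup_(G in F) G).
Proof.
move=> FP tot; split.
- move=> a x r y s [G1 FG1 H1] [G2 FG2 H2].
  have [S12|S21] := tot _ _ FG1 FG2.
  + have [cl _ _ _] := FP _ FG2; exists G2 => //; apply: cl => //; exact: S12.
  + have [cl _ _ _] := FP _ FG1; exists G1 => //; apply: cl => //; exact: S21.
- move=> x r s [G1 FG1 H1] [G2 FG2 H2].
  have [S12|S21] := tot _ _ FG1 FG2.
  + have [_ fn _ _] := FP _ FG2; exact: fn (S12 _ H1) H2.
  + have [_ fn _ _] := FP _ FG1; exact: fn H1 (S21 _ H2).
- move=> x r [G FG H]; have [_ _ dm _] := FP _ FG; exact: dm H.
- move=> z [G FG H]; have [_ _ _ bs] := FP _ FG; exists G => //; exact: bs H.
Qed.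

Definition B0 : set (X * R) := [set z | exists t, z = (t *: v, t * `|v|)].

Lemma PG_B0 : PG B0.
Proof.
split.
- move=> a x r y s [t [-> ->]] [t' [-> ->]]; exists (a * t + t').
  by rewrite scalerDl scalerA; congr pair; ring.
- move=> x r s [t [-> ->]] [t' [E ->]].
  have : (t - t') *: v = 0 by rewrite scalerBl E subrr.
  by move/eqP; rewrite scaler_eq0 (negbTE v0) orbF subr_eq0 => /eqP ->.
- move=> x r [t [-> ->]]; rewrite normrZ ler_pM2r ?normr_gt0 //; exact: ler_norm.
- by move=> _ _; exists 1; rewrite scale1r mul1r.
Qed.

Lemma hahn_banach_norm : exists xi : X -> R,
  dual_elt xi /\ xi v = `|v| /\ forall x, `|xi x| <= `|x|.
Proof.
have [A [PA Amax]] := @Zorn_bigcup (X * R)%type PG PG_chain.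
have [cl fn dm bs] := PA.
have Av : A (v, `|v|).
  apply: contrapT => nAv; apply: (Amax B0) PG_B0; split.
    by move=> z Az; exfalso; apply: nAv; exact: bs Az.
  move=> sub; apply: nAv; apply: sub; exists 1; by rewrite scale1r mul1r.
have A0 : A (0, 0).
  by have := cl (-1) _ _ _ _ Av Av; rewrite scaleN1r addNr mulN1r addNr.
have Ascale a x r : A (x, r) -> A (a *: x, a * r).
  by move=> H; have := cl a _ _ _ _ H A0; rewrite addr0 addr0.
have Asub x r y s : A (x, r) -> A (y, s) -> A (y - x, s - r).
  by move=> H1 H2; have := cl (-1) _ _ _ _ H1 H2; rewrite scaleN1r mulN1r !(addrC (- _)).
have total x0 : exists r, A (x0, r).
  apply: contrapT => nA.
  have nA' r : ~ A (x0, r) by move=> H; apply: nA; exists r.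
  pose L := [set w | exists y s, A (y, s) /\ w = s - `|y - x0|].
  have key x r y s : A (x, r) -> A (y, s) -> s - `|y - x0| <= `|x + x0| - r.
    move=> H1 H2; have := dm _ _ (cl 1 _ _ _ _ H1 H2); rewrite scale1r mul1r => H.
    have : `|x + y| <= `|x + x0| + `|y - x0|.
      by rewrite (_ : x + y = (x + x0) + (y - x0)); [exact: ler_normD|
        by rewrite addrACA subrr addr0].
    lra.
  have Lne : L !=set0 by exists (0 - `|0 - x0|), 0, 0.
  have Lsup : has_sup L.
    split => //; exists (`|0 + x0| - 0) => _ [y [s [H ->]]]; exact: key A0 H.
  pose c := sup L.
  have c_ub y s : A (y, s) -> s - `|y - x0| <= c.
    by move=> H; apply: (sup_upper_bound Lsup); exists y, s.
  have c_lb x r : A (x, r) -> c <= `|x + x0| - r.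
    by move=> H; apply: ge_sup => // _ [y [s [H2 ->]]]; exact: key H H2.
  pose B := [set z | exists x r t, A (x, r) /\ z = (x + t *: x0, r + t * c)].
  apply: (Amax B).
  - split.
    + move=> [x r] H; exists x, r, 0; split => //; by rewrite scale0r mul0r !addr0.
    + move=> sub; have : B (x0, c) by exists 0, 0, 1; rewrite scale1r mul1r !add0r.
      by move/sub/nA'.
  - split.
    + move=> a x r y s [x1 [r1 [t1 [H1 [-> ->]]]]] [x2 [r2 [t2 [H2 [-> ->]]]]].
      exists (a *: x1 + x2), (a * r1 + r2), (a * t1 + t2); split; first exact: cl.
      congr pair; last by ring.
      by rewrite scalerDr scalerA addrACA -scalerDl.
    + move=> x r s [x1 [r1 [t1 [H1 [E1 ->]]]]] [x2 [r2 [t2 [H2 [E2 ->]]]]].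
      rewrite E1 in E2.
      have t12 : t1 = t2.
        apply: contrapT => /eqP; rewrite -subr_eq0 => nt.
        apply: (nA' ((t1 - t2)^-1 * (r2 - r1))).
        have := Ascale ((t1 - t2)^-1) _ _ (Asub _ _ _ _ H1 H2).
        rewrite (_ : x2 - x1 = (t1 - t2) *: x0) ?scalerA ?mulVf ?scale1r //.
        apply/eqP; rewrite scalerBl subr_eq addrAC -subr_eq opprK addrC.
        by rewrite -E2 addrC.
      subst t2; have E : x1 = x2 by apply: (addIr (t1 *: x0)).
      subst x2; by rewrite (fn _ _ _ H1 H2).
    + move=> x r [x1 [r1 [t [H1 [[-> ->]]]]]].
      have [t0|tn0] := eqVneq t 0.
        by rewrite t0 scale0r mul0r !addr0; exact: dm H1.
      have [tp|tn] := ltrP 0 t.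
      * have := c_lb _ _ (Ascale t^-1 _ _ H1) => H.
        have E : `|x1 + t *: x0| = t * `|t^-1 *: x1 + x0|.
          have -> : x1 + t *: x0 = t *: (t^-1 *: x1 + x0).
            by rewrite scalerDr scalerA mulfV ?gt_eqF // scale1r.
          by rewrite normrZ gtr0_norm.
        rewrite E; rewrite -(ler_pM2l tp) in H.
        move: H; rewrite mulrBr mulrA mulfV // mul1r; lra.
      * have up : 0 < - t by rewrite oppr_gt0 lt_neqAle tn0.
        have := c_ub _ _ (Ascale (- t)^-1 _ _ H1) => H.
        have E : `|x1 + t *: x0| = (- t) * `|(- t)^-1 *: x1 - x0|.
          have -> : x1 + t *: x0 = (- t) *: ((- t)^-1 *: x1 - x0).
            rewrite scalerDr scalerA mulfV ?gt_eqF // scale1r.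
            by rewrite scalerN scaleNr opprK.
          by rewrite normrZ gtr0_norm.
        rewrite E; rewrite -(ler_pM2l up) in H.
        move: H; rewrite mulrBr mulrA mulfV ?gt_eqF // mul1r; lra.
    + move=> z [x [r [t [H _]]]]; exists v, `|v|, 0; split; first exact: bs H.
      by rewrite scale0r mul0r !addr0.
have [g Hg] := choice total.
have gE x r : A (x, r) -> g x = r by move=> H; exact: fn _ _ _ (Hg x) H.
have glin : forall a x y, g (a *: x + y) = a * g x + g y.
  by move=> a x y; apply: gE; exact: cl.
have gN x : g (- x) = - g x.
  by rewrite -scaleN1r -[_ *: x]addr0 glin (gE _ _ A0) addr0 mulN1r.
have gD x y : g (x + y) = g x + g y.
  by rewrite -[x in LHS]scale1r glin mul1r.
have gle x : `|g x| <= `|x|.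
  rewrite ler_norml dm ?andbT //; have := dm _ _ (Hg (- x)).
  by rewrite gN normrN lerNl.
exists g; split; [split => // | split; [exact: gE|exact: gle]].
move=> x; apply/cvgrPdist_lt => e e0; apply/nbhs_normP; exists e => //= y /= hy.
have -> : g x - g y = g (x - y).
  by rewrite gD gN.
exact: le_lt_trans (gle _) hy.
Qed.

End HBsec.

Section Core.
Variables (R : realType) (X : normedModType R).
Implicit Types xi eta : X -> R.

Lemma elim_le (c : R) (F : \bar R) :
  (forall eps, 0 < eps -> ((c - eps)%:E <= F)%E) -> (c%:E <= F)%E.
Proof.
case: F => [a| |] H; last first.
- by have := H 1 ltr01; rewrite leeNy_eq.
- exact: leey.
rewrite lee_fin; apply/ler_addgt0Pr => e e0; have := H e e0; rewrite lee_fin; lra.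
Qed.

Lemma fin_xbar (f : X -> \bar R) xbar : proper_fun f -> subdiff f xbar (fun _ => 0) ->
  exists b, f xbar = b%:E.
Proof.
move=> [nI [y0 fy0]] [_ H]; have := H y0; rewrite /= !sube0.
case E: (f xbar) => [b| |]; first by exists b.
- by rewrite leye_eq => /eqP; move: fy0 => /eqP.
- by move: (nI xbar); rewrite E.
Qed.

Lemma keyK (f : X -> \bar R) xbar b z eta :
  proper_fun f -> subdiff f xbar (fun _ => 0) -> f xbar = b%:E ->
  subdiff f z eta -> forall y,
  ((b + eta (y - xbar) - dnorm eta * `|z - xbar|)%:E <= f y)%E.
Proof.
move=> [nI _] [_ Hx] fb [de Hz] y.
case Ey: (f y) => [a| |]; last first.
- by move: (nI y); rewrite Ey.
- exact: leey.
have := Hz y; rewrite Ey.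
case Ez: (f z) => [c| |]; last first.
- by move: (nI z); rewrite Ez.
- by [].
rewrite -!EFinB lee_fin => H1.
have := Hx z; rewrite Ez fb /= !sube0 lee_fin => H2.
have H3 : eta (z - xbar) <= dnorm eta * `|z - xbar|.
  have := @my_dnorm_le _ _ eta (z - xbar) de; apply: le_trans; exact: (@ler_norm R _).
rewrite lee_fin (my_linB _ _ de); rewrite (my_linB _ _ de) in H3; lra.
Qed.

Lemma powR_cont (d s : R) : 0 < d -> forall eps, 0 < eps ->
  exists2 e1, 0 < e1 & forall e, 0 <= e -> e < e1 -> (d + e) `^ s <= d `^ s + eps.
Proof.
move=> d0 eps e0.
have D : derivable (fun a : R => a `^ s) d 1 by apply: derivable_powR; rewrite in_itv /= d0.
have C : {for d, continuous (fun a : R => a `^ s)}.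
  by apply: differentiable_continuous; apply/derivable1_diffP.
have /(_ _) H := @cvgr_dist_lt _ _ _ _ _ (fun a : R => a `^ s) _ C eps e0.
have [/= e1 e1p He] := iffLR (nbhs_normP _ _) H.
exists e1 => // e ege elt.
have : `|d `^ s - (d + e) `^ s| < eps.
  apply: (He (d + e)) => /=; rewrite opprD addrA subrr sub0r normrN ger0_norm //.
move=> /ltW; rewrite ler_distlC => /andP [_ ->] //.
Qed.

End Core.

Section Core1.
Variables (R : realType) (X : normedModType R).

Lemma core1 (f : X -> \bar R) xbar b (beta : \bar R) kappa (W : set (X -> R)) (s : R) x t :
  proper_fun f -> subdiff f xbar (fun _ => 0) -> f xbar = b%:E ->
  0 <= s -> dense_in W (dball0 beta) ->
  (forall xi, W xi -> exists z, subdiff f z xi /\ `|z - xbar| <= kappa * (dnorm xi) `^ s) ->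
  0 < kappa -> 0 < t -> (t%:E <= beta)%E -> kappa * t `^ s <= `|x - xbar| / 2 -> x != xbar ->
  ((b + t * `|x - xbar| / 2)%:E <= f x)%E.
Proof.
move=> fp fx fb s0 [WB BW] HW k0 t0 tb tk xn.
have xn' : x - xbar != 0 by rewrite subr_eq0.
set r := `|x - xbar| in tk *.
have r0 : 0 < r by rewrite normr_gt0.
have [xi0 [d0 [xv xle]]] := @hahn_banach_norm R X (x - xbar) xn'.
apply: elim_le => eps e0.
pose e := Order.min (t / 2) (eps / (2 * r)).
have e_pos : 0 < e by rewrite lt_min !divr_gt0 ?mulr_gt0.
have e_le1 : e <= t / 2 by rewrite ge_min lexx.
have e_le2 : e <= eps / (2 * r) by rewrite ge_min lexx orbT.
have er : e * r * 2 <= eps.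
  by move: e_le2; rewrite ler_pdivlMr ?mulr_gt0 //; lra.
pose xi' := fun y => (t - e) * xi0 y.
have dxi' : dual_elt xi' := my_dual_scale (t - e) d0.
have te : 0 <= t - e by lra.
have nxi' : dnorm xi' <= t - e.
  apply: my_dnorm_leP => // y y1; rewrite /xi' normrM (ger0_norm te).
  rewrite -[X in _ <= X]mulr1; apply: ler_wpM2l => //.
  exact: le_trans (xle y) y1.
have Bxi' : dball0 beta xi'.
  by split => //; apply: le_trans tb; rewrite lee_fin; lra.
have [_ cl] := BW _ Bxi'.
have [eta Weta deta] := cl e e_pos.
have deta_e : dual_elt eta by have [] := WB _ Weta.
have ddiff := my_dual_sub dxi' deta_e.
have dd0 := my_dnorm_ge0 ddiff.
have neta : dnorm eta <= t.
  apply: my_dnorm_leP => // y y1.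
  have h1 := @my_dnorm_le _ _ _ y ddiff.
  have h2 := @my_dnorm_le _ _ _ y dxi'.
  have h3 : dnorm (fun y => xi' y - eta y) * `|y| <= e * 1.
    by apply: ler_pM => //; exact: ltW.
  have h4 : dnorm xi' * `|y| <= (t - e) * 1.
    by apply: ler_pM => //; exact: my_dnorm_ge0.
  have h5 := ler_normB (xi' y) (xi' y - eta y).
  rewrite (_ : xi' y - (xi' y - eta y) = eta y) in h5; last by ring.
  lra.
have [z [Hz Hzd]] := HW _ Weta.
have zb : `|z - xbar| <= r / 2.
  apply: le_trans Hzd _; apply: le_trans tk; apply: ler_wpM2l; first exact: ltW.
  by apply: ge0_ler_powR => //; rewrite nnegrE ?my_dnorm_ge0 ?ltW.
have K := keyK fp fx fb Hz x.
have gain : (t - e) * r - e * r <= eta (x - xbar).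
  have h1 := @my_dnorm_le _ _ _ (x - xbar) ddiff.
  have h2 : dnorm (fun y => xi' y - eta y) * r <= e * r.
    by apply: ler_wpM2r; [exact: ltW | exact: ltW].
  have h3 := ler_norm (xi' (x - xbar) - eta (x - xbar)).
  rewrite /xi' xv -/r in h1 h3; lra.
have loss : dnorm eta * `|z - xbar| <= t * (r / 2).
  by apply: ler_pM => //; exact: my_dnorm_ge0.
apply: le_trans K; rewrite lee_fin; lra.
Qed.

End Core1.

Section Core2.
Variables (R : realType) (X : normedModType R).

Lemma core2 (f : X -> \bar R) xbar b (alpha : \bar R) kappa (s : R) u xi :
  proper_fun f -> subdiff f xbar (fun _ => 0) -> f xbar = b%:E ->
  0 <= s -> 0 < kappa ->
  (forall x, cball xbar alpha x ->
     ((`|x - xbar|)%:E <= kappa%:E * (dist0_subdiff f x) `^ s)%E) ->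
  dual_elt xi -> xi u = dnorm xi * `|u| ->
  dclosure (subdiff_set f (cball xbar alpha)) xi -> 0 < dnorm xi ->
  ((b + 2 * kappa * (dnorm xi * `|u|) - kappa * (dnorm xi * dnorm xi `^ s))%:E
     <= f ((xbar + (2 * kappa) *: u)%R))%E.
Proof.
move=> fp fx fb s0 k0 Hsr dxi xiu [_ cl] dpos.
set nu := `|u|; set d := dnorm xi in xiu dpos *.
have nu0 : 0 <= nu by exact: normr_ge0.
have ds0 : 0 <= d `^ s by exact: powR_ge0.
apply: elim_le => eps e0.
pose M := 2 * nu + d + d `^ s + 1.
have M0 : 0 < M by rewrite /M; lra.
pose et := Order.min 1 (eps / (kappa * M)).
have et0 : 0 < et by rewrite lt_min ltr01 divr_gt0 ?mulr_gt0.
have et1 : et <= 1 by rewrite ge_min lexx.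
have et2 : kappa * (et * M) <= eps.
  have : et <= eps / (kappa * M) by rewrite ge_min lexx orbT.
  rewrite ler_pdivlMr ?mulr_gt0 //; lra.
have [e1 e1p He1] := powR_cont s dpos et0.
pose e := Order.min et e1 / 2.
have m0 : 0 < Order.min et e1 by rewrite lt_min et0.
have e_pos : 0 < e by rewrite divr_gt0.
have mle1 : Order.min et e1 <= et by rewrite ge_min lexx.
have mle2 : Order.min et e1 <= e1 by rewrite ge_min lexx orbT.
have e_et : e <= et by rewrite /e; lra.
have e_e1 : e < e1 by rewrite /e; lra.
have [eta [z zB Hz] deta] := cl e e_pos.
have de : dual_elt eta by case: Hz.
have ddiff := my_dual_sub dxi de.
have dd0 := my_dnorm_ge0 ddiff.
have neta : dnorm eta <= d + e.
  apply: my_dnorm_leP => // y y1.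
  have h1 := @my_dnorm_le _ _ _ y ddiff.
  have h2 := @my_dnorm_le _ _ _ y dxi; rewrite -/d in h2.
  have h3 : dnorm (fun y => xi y - eta y) * `|y| <= e * 1.
    by apply: ler_pM => //; exact: ltW.
  have h4 : d * `|y| <= d * 1 by apply: ler_wpM2l => //; exact: ltW.
  have h5 := ler_normB (xi y) (xi y - eta y).
  rewrite (_ : xi y - (xi y - eta y) = eta y) in h5; last by ring.
  lra.
have dn0 := my_dnorm_ge0 de.
have dist_le : (dist0_subdiff f z <= (dnorm eta)%:E)%E.
  by apply: ereal_inf_lbound; exists eta.
have dist_ge : (0 <= dist0_subdiff f z)%E.
  apply: le_ereal_inf_tmp => _ [xi1 [dxi1 _] <-]; rewrite lee_fin.
  exact: my_dnorm_ge0.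
have zb : `|z - xbar| <= kappa * (d `^ s + et).
  have H := Hsr z zB.
  have : ((dist0_subdiff f z) `^ s <= ((dnorm eta) `^ s)%:E)%E.
    rewrite -poweR_EFin; apply: gt0_ler_poweR => //.
      by rewrite in_itv /= dist_ge leey.
    by rewrite in_itv /= lee_fin dn0 leey.
  move=> /(lee_wpmul2l (ltW (k0 : (0 < kappa%:E)%E))) H2.
  have := le_trans H H2; rewrite -EFinM lee_fin => H3.
  apply: le_trans H3 _; apply: ler_wpM2l; first exact: ltW.
  apply: le_trans (He1 e (ltW e_pos) e_e1).
  by apply: ge0_ler_powR => //; rewrite nnegrE //; lra.
have K := keyK fp fx fb Hz (xbar + (2 * kappa) *: u).
have Ev : xbar + (2 * kappa) *: u - xbar = (2 * kappa) *: u.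
  by rewrite addrAC subrr add0r.
rewrite Ev (my_linZ _ _ de) in K.
have gain : d * nu - e * nu <= eta u.
  have h1 := @my_dnorm_le _ _ _ u ddiff.
  have h2 : dnorm (fun y => xi y - eta y) * nu <= e * nu.
    by apply: ler_wpM2r => //; exact: ltW.
  have h3 := ler_norm (xi u - eta u).
  rewrite xiu -/nu in h1 h3; lra.
have gain2 : 2 * kappa * (d * nu - e * nu) <= 2 * kappa * eta u.
  by apply: ler_wpM2l => //; lra.
have loss : dnorm eta * `|z - xbar| <= (d + e) * (kappa * (d `^ s + et)).
  by apply: ler_pM.
have F1 : e * nu <= et * nu by apply: ler_wpM2r.
have F2 : e * d `^ s <= et * d `^ s by apply: ler_wpM2r.
have F3 : e * et <= 1 * et by apply: ler_wpM2r; lra.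
have G : kappa * (2 * e * nu + d * et + e * d `^ s + e * et) <= kappa * (et * M).
  by apply: ler_wpM2l; [lra | rewrite /M; lra].
apply: le_trans K; rewrite lee_fin; lra.
Qed.

End Core2.

Unset Implicit Arguments. Set Strict Implicit. Set Printing Implicit Defensive.

Theorem theorem4p1 (R : realType) (X : normedModType R) (f : X -> \bar R)
    (xbar : X) (p q : R) :
  proper_fun f ->
  subdiff f xbar (fun _ => 0) ->
  1 < p -> 1 < q -> p^-1 + q^-1 = 1 ->
  (forall (beta : \bar R) (kappa : R) (W : set (X -> R)),
      (0 < beta)%E -> 0 < kappa ->
      dense_in W (@dball0 R X beta) ->
      (forall xi, W xi -> exists x, subdiff f x xi /\
                     `|x - xbar| <= kappa * (dnorm xi) `^ (q / p)) ->
      forall delta : R, 0 < delta ->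
      forall x, `|x - xbar| <= delta ->
        (f x >= f xbar + (2^-1)%:E *
           Order.min (beta * ((delta `^ (p / q))^-1)%:E)
                     (((2 * kappa) `^ (p / q))^-1)%:E
           * (`|x - xbar| `^ p)%:E)%E)
  /\
  (forall (alpha : \bar R) (kappa : R),
      (0 < alpha)%E -> 0 < kappa ->
      subdiff_strongly_subregular f xbar (q / p) alpha kappa ->
      forall x, x \in [set xbar + (2 * kappa) *: u | u in
                  dualmap_inv p (dclosure (subdiff_set f (cball xbar alpha)))] ->
        (f x >= f xbar + ((2 * (2 * kappa) `^ (p / q))^-1 * `|x - xbar| `^ p)%:E)%E).
Proof.
move=> fp fx p1 q1 hpq.
have p0 : 0 < p by lra.
have q0 : 0 < q by lra.
have [b fb] := fin_xbar fp fx.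
have Pq : p / q = p - 1.
  have hq : q^-1 = 1 - p^-1 by lra.
  by rewrite hq mulrBr mulr1 mulfV ?gt_eqF.
have Qp : q / p = q - 1.
  have hp : p^-1 = 1 - q^-1 by lra.
  by rewrite hp mulrBr mulr1 mulfV ?gt_eqF.
have PQ : (p / q) * (q / p) = 1 by field; rewrite !gt_eqF.
have s0 : 0 <= q / p by rewrite divr_ge0 ?ltW.
have P0 : 0 <= p / q by rewrite divr_ge0 ?ltW.
have pn0 : p != 0 by rewrite gt_eqF.
have rpow : forall y, 0 < y -> y `^ p = y `^ (p / q) * y.
  move=> y y0; rewrite -{3}(powRr1 (ltW y0)) -powRD; first by rewrite Pq subrK.
  by apply/implyP => _; rewrite gt_eqF.
split.
- move=> beta kappa W b0 k0 dW HW delta d0 x xd.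
  rewrite fb.
  have [xe|xn] := eqVneq x xbar.
    subst x; rewrite subrr normr0 powR0 // mule0 adde0 -fb; exact: lexx.
  set r := `|x - xbar| in xd *.
  have r0 : 0 < r by rewrite normr_gt0 subr_eq0.
  have kk0 : 0 < 2 * kappa by rewrite mulr_gt0.
  pose T := (r / (2 * kappa)) `^ (p / q).
  have rk0 : 0 <= r / (2 * kappa) by rewrite divr_ge0 ?ltW.
  have T0 : 0 < T by rewrite powR_gt0 // divr_gt0.
  have Ts : kappa * T `^ (q / p) = r / 2.
    rewrite /T -powRrM PQ powRr1 //; field; rewrite gt_eqF //.
  have TrE : T * r = r `^ p / (2 * kappa) `^ (p / q).
    have e1 : T * (2 * kappa) `^ (p / q) = r `^ (p / q).
      rewrite /T -powRM; [|exact: rk0|exact: ltW]; congr (_ `^ _); field; rewrite gt_eqF //.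
    rewrite (rpow _ r0) -e1; field; rewrite gt_eqF // powR_gt0 //.
  have c0 : 0 < (2 * kappa) `^ (p / q) by rewrite powR_gt0.
  move: b0; case: beta dW => [bt| |] dW // b0.
  + have bt0 : 0 < bt by rewrite -lte_fin.
    pose t := Order.min bt T.
    have t0 : 0 < t by rewrite lt_min bt0 T0.
    have tb : t <= bt by rewrite ge_min lexx.
    have tT : t <= T by rewrite ge_min lexx orbT.
    have tk : kappa * t `^ (q / p) <= r / 2.
      rewrite -Ts; apply: ler_wpM2l; first exact: ltW.
      by apply: ge0_ler_powR => //; rewrite nnegrE ltW.
    have H := core1 fp fx fb s0 dW HW k0 t0 (tb : (t%:E <= bt%:E)%E) tk xn.
    apply: le_trans H; rewrite -EFinM -EFin_min -!EFinM -EFinD lee_fin lerD2l.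
    have dP0 : 0 < delta `^ (p / q) by rewrite powR_gt0.
    rewrite /t; have [bT|Tb] := lerP bt T.
    * rewrite -/r.
      have rp : r `^ p <= r * delta `^ (p / q).
        rewrite (rpow _ r0) mulrC; apply: ler_wpM2l; first exact: ltW.
        by apply: ge0_ler_powR => //; rewrite nnegrE ltW.
      have m1 : Num.min (bt / delta `^ (p / q)) ((2 * kappa) `^ (p / q))^-1
          <= bt / delta `^ (p / q) by rewrite ge_min lexx.
      have h1 : Num.min (bt / delta `^ (p / q)) ((2 * kappa) `^ (p / q))^-1 * r `^ p
          <= bt / delta `^ (p / q) * r `^ p by apply: ler_wpM2r => //; exact: powR_ge0.
      have h2 : bt / delta `^ (p / q) * r `^ p <= bt / delta `^ (p / q) * (r * delta `^ (p / q)).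
        by apply: ler_wpM2l => //; rewrite divr_ge0 ?ltW.
      have h3 : bt / delta `^ (p / q) * (r * delta `^ (p / q)) = bt * r.
        by field; rewrite gt_eqF.
      apply: le_trans (_ : 2^-1 * (bt * r) <= _); last by rewrite mulrC.
      rewrite -mulrA; apply: ler_wpM2l; first by rewrite invr_ge0 ler0n.
      lra.
    * rewrite -/r.
      apply: le_trans (_ : 2^-1 * (T * r) <= _); last by rewrite mulrC.
      rewrite -mulrA; apply: ler_wpM2l; first by rewrite invr_ge0 ler0n.
      rewrite TrE mulrC; apply: ler_wpM2l; first exact: powR_ge0.
      by rewrite ge_min lexx orbT.
  + have tk2 : kappa * T `^ (q / p) <= r / 2 by rewrite Ts lexx.
    have H := core1 fp fx fb s0 dW HW k0 T0 (leey T%:E) tk2 xn.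
    apply: le_trans H; rewrite gt0_mulye ?lte_fin ?invr_gt0 ?powR_gt0 //.
    rewrite (min_r (leey _)) -!EFinM -EFinD lee_fin lerD2l -/r TrE.
    rewrite le_eqVlt; apply/orP; left; apply/eqP; field; rewrite gt_eqF //.
- move=> alpha kappa a0 k0 [sub0 Hsr] x /set_mem [u [xi [dxi [xiu dn]] clo] <-].
  rewrite fb.
  have [u0|un] := eqVneq u 0.
    subst u; rewrite scaler0 addr0 subrr normr0 powR0 // mulr0 adde0 -fb; exact: lexx.
  have nu0 : 0 < `|u| by rewrite normr_gt0.
  have d0 : 0 < dnorm xi by rewrite dn powR_gt0.
  have H := core2 fp fx fb s0 k0 Hsr dxi xiu clo d0.
  apply: le_trans H; rewrite -EFinD lee_fin.
  have kk0 : 0 < 2 * kappa by rewrite mulr_gt0.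
  have dnu : dnorm xi * `|u| = `|u| `^ p.
    by rewrite dn mulrC mulr_powRB1 // ltW.
  have dds : dnorm xi `^ (q / p) = `|u|.
    by rewrite dn -powRrM -Pq PQ powRr1 // ltW.
  have nE : `|xbar + (2 * kappa) *: u - xbar| = 2 * kappa * `|u|.
    by rewrite addrAC subrr add0r normrZ gtr0_norm.
  rewrite dds dnu nE.
  have c0 : 0 < (2 * kappa) `^ (p / q) by rewrite powR_gt0.
  have Fin : b + (2 * (2 * kappa) `^ (p / q))^-1 * (2 * kappa * `|u|) `^ p <=
    b + 2 * kappa * `|u| `^ p - kappa * `|u| `^ p.
    rewrite (@powRM R (2 * kappa) `|u| p (ltW kk0) (ltW nu0)) (rpow _ kk0).
    rewrite le_eqVlt; apply/orP; left; apply/eqP; field; rewrite !gt_eqF //.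
  exact: Fin.
Qed.
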